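(* Let $G=(V,E)$ be a connected bipartite graph with at least two edges and with vertex bipartition $V=X\cup Y$ (i.e. $X,Y$ independent sets partitioning $V$), and suppose $G$ is not a star $K_{1,m}$ whose center lies in $Y$. Then $G$ has a subgraph $H$ such that every vertex $y\in Y$ satisfies $d_H(y)\ge 1$, and every connected component of $H$ is either a star $K_{1,m}$ with $m\ge2$ whose center lies in $X$, or a subdivided star obtained from $K_{1,m}$ with $m\ge 2$ by subdividing each edge exactly once, whose center (the vertex of degree $m$) lies in $Y$.
   Context: A star $K_{1,m}$ has center its vertex of degree $m$. A subdivided star arises from a star by replacing every edge with a path of length $2$; its center is the center of the original star. *)

(* Defs.v *)
(* Simple graphs as symmetric irreflexive relations on a finType. *)
From mathcomp Require Import all_boot.
Set Implicit Arguments. Unset Strict Implicit. Unset Printing Implicit Defensive.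

Section Graphs.
Variable T : finType.

Definition connected_graph (e : rel T) : Prop := forall x y : T, connect e x y.

Definition bipartition (e : rel T) (X Y : {set T}) : Prop :=
  [/\ X :&: Y = set0, X :|: Y = setT,
      (forall x y, x \in X -> y \in X -> ~~ e x y) &
      (forall x y, x \in Y -> y \in Y -> ~~ e x y)].

Definition at_least_two_edges (e : rel T) : Prop :=
  exists a b c d : T, [/\ e a b, e c d & [set a; b] != [set c; d]].

Definition graph_is_star_centered (e : rel T) (c : T) : Prop :=
  forall x y : T, e x y = ((x == c) != (y == c)).

Definition subgraph (e : rel T) (S : {set T}) (h : rel T) : Prop :=
  [/\ symmetric h,
      (forall x y, h x y -> e x y) &
      (forall x y, h x y -> x \in S /\ y \in S)].

Definition component (h : rel T) (x : T) : {set T} := [set y | connect h x y].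

Definition comp_is_star (h : rel T) (C : {set T}) (c : T) : Prop :=
  exists m (f : 'I_m -> T),
    [/\ 2 <= m, injective f, c \notin codom f,
        C = c |: [set f i | i : 'I_m] &
        forall x y, x \in C -> y \in C ->
          (h x y <-> exists i, (x = c /\ y = f i) \/ (x = f i /\ y = c))].

(* H restricted to C is a subdivided star (K_{1,m}, m >= 2, each edge
   subdivided once) with center c: edges c - a i and a i - b i *)
Definition comp_is_subdivided_star (h : rel T) (C : {set T}) (c : T) : Prop :=
  exists m (a b : 'I_m -> T),
    2 <= m /\ injective a /\ injective b /\
    c \notin codom a /\ c \notin codom b /\
    [disjoint codom a & codom b] /\
    C = c |: ([set a i | i : 'I_m] :|: [set b i | i : 'I_m]) /\
    (forall x y, x \in C -> y \in C ->
       (h x y <-> exists i,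
          (x = c /\ y = a i) \/ (x = a i /\ y = c) \/
          (x = a i /\ y = b i) \/ (x = b i /\ y = a i))).

End Graphs.

(* Main.v *)
Require Import Defs.
From mathcomp Require Import all_boot zify.
Set Implicit Arguments. Unset Strict Implicit. Unset Printing Implicit Defensive.

Section Forest.
Variable T : finType.
Variable par : T -> option T.
Hypothesis depth : forall u v w, par u = Some v -> par v = Some w -> par w = None.

Definition hp : rel T := fun u v => (par u == Some v) || (par v == Some u).
Definition rt v := match par v with None => v | Some w => match par w with None => w | Some w' => w' end end.

Lemma hp_sym : symmetric hp.
Proof. by move=> u v; rewrite /hp orbC. Qed.

Lemma hp_rt_dir u v : par u = Some v -> rt u = rt v.
Proof.
move=> H; rewrite /rt H; case E: (par v) => [w|] //.
by rewrite (depth H E).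
Qed.

Lemma hp_rt u v : hp u v -> rt u = rt v.
Proof. by case/orP=> /eqP H; [exact: hp_rt_dir | symmetry; exact: hp_rt_dir]. Qed.

Lemma connect_rt u v : connect hp u v -> rt u = rt v.
Proof.
case/connectP=> p; elim: p u => [|a p IH] u /=; first by move=> _ ->.
by case/andP=> H1 H2 E; rewrite (hp_rt H1); apply: IH.
Qed.

Lemma connect_to_rt u : connect hp u (rt u).
Proof.
rewrite /rt; case E: (par u) => [v|] //.
have huv : hp u v by rewrite /hp E eqxx.
case E2: (par v) => [w|]; last exact: connect1.
apply: (connect_trans (connect1 huv)); apply: connect1; by rewrite /hp E2 eqxx.
Qed.

Lemma connect_hpE u v : connect hp u v = (rt u == rt v).
Proof.
apply/idP/idP; first by move/connect_rt ->.
move/eqP=> E; apply: (connect_trans (connect_to_rt u)); rewrite E.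
by rewrite (sym_connect_sym hp_sym) connect_to_rt.
Qed.

Lemma rt_none u : par (rt u) = None.
Proof.
rewrite /rt; case E: (par u) => [v|]; last exact: E.
case E2: (par v) => [w|]; [exact: depth E E2 | exact: E2].
Qed.

Lemma rt_char v r : par r = None ->
  (rt v == r) = [|| v == r, par v == Some r | [exists w, (par w == Some r) && (par v == Some w)]].
Proof.
move=> Hr; rewrite /rt; case E: (par v) => [w|].
  have vr : (v == r) = false by apply/eqP=> vr; rewrite vr Hr in E.
  rewrite vr /=; case E2: (par w) => [w'|].
    have wr : (Some w == Some r) = false by apply/eqP=> -[wr]; rewrite wr Hr in E2.
    rewrite wr /=; apply/idP/existsP.
      by move/eqP=> <-; exists w; rewrite E2 !eqxx.
    by case=> w0 /andP[/eqP H1 /eqP [H2]]; rewrite -H2 E2 in H1; case: H1 => ->.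
  case: existsP; rewrite ?orbT ?orbF //.
  move=> -[w0 /andP[/eqP H1 /eqP [H2]]].
  by rewrite -H2 E2 in H1.
rewrite /=; case: existsP; rewrite ?orbT ?orbF //.
by case=> w0 /andP[_ /eqP].
Qed.

Lemma component_rt u : component hp u =
  rt u |: ([set v | par v == Some (rt u)] :|:
           [set v | [exists w, (par w == Some (rt u)) && (par v == Some w)]]).
Proof.
apply/setP=> v; rewrite !inE connect_hpE eq_sym rt_char ?rt_none //.
Qed.


Lemma imset_ev (A : {set T}) : [set enum_val i | i : 'I_#|A|] = A.
Proof.
apply/setP=> v; apply/imsetP/idP.
  by case=> i _ ->; exact: enum_valP.
by move=> Hv; exists (enum_rank_in Hv v) => //; rewrite enum_rankK_in.
Qed.

Lemma star_gen u :
  (forall v w, par v = Some w -> par w != Some (rt u)) ->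
  1 < #|[set v | par v == Some (rt u)]| ->
  comp_is_star hp (component hp u) (rt u).
Proof.
set r := rt u; set A := [set v | par v == Some r] => hB hA.
have Hr : par r = None by exact: rt_none.
have CE : component hp u = r |: A.
  rewrite component_rt; congr (_ |: _); apply/setP => v; rewrite !inE.
  case: existsP => [[w /andP[/eqP H1 /eqP H2]]|]; last by rewrite orbF.
  by have := hB _ _ H2; rewrite H1 eqxx.
exists #|A|, (@enum_val _ (pred_of_set A)); split => //.
- exact: enum_val_inj.
- apply/codomP => -[i Ei]; have := enum_valP i; rewrite inE -Ei Hr; done.
- by rewrite CE imset_ev.
move=> x y; rewrite CE !inE => Hx Hy; split.
  have key : forall x y, (x == r) || (par x == Some r) -> par x == Some y ->
     exists i : 'I_#|A|, x = enum_val i /\ y = r.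
    move=> x0 y0; case/orP=> [/eqP ->|/eqP H]; first by rewrite Hr.
    rewrite H => /eqP [<-].
    have xA : x0 \in A by rewrite inE H.
    by exists (enum_rank_in xA x0); rewrite enum_rankK_in.
  case/orP=> H.
    by case: (key _ _ Hx H) => i [-> ->]; exists i; right.
  by case: (key _ _ Hy H) => i [-> ->]; exists i; left.
case=> i [[-> ->]|[-> ->]]; rewrite /hp.
  by have := enum_valP i; rewrite inE => ->; rewrite orbT.
by have := enum_valP i; rewrite inE => ->.
Qed.

Lemma sub_gen u (child : T -> T) :
  (forall x, par x = Some (rt u) -> par (child x) = Some x) ->
  (forall v x, par x = Some (rt u) -> par v = Some x -> v = child x) ->
  1 < #|[set v | par v == Some (rt u)]| ->
  comp_is_subdivided_star hp (component hp u) (rt u).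
Proof.
set r := rt u; set A := [set v | par v == Some r] => hc1 hc2 hA.
have Hr : par r = None by exact: rt_none.
set a := @enum_val _ (pred_of_set A).
have aP : forall i, par (a i) = Some r.
  by move=> i; have := enum_valP i; rewrite inE => /eqP.
set b := fun i => child (a i).
have bP : forall i, par (b i) = Some (a i) by move=> i; apply: hc1.
have aE : forall x, par x = Some r -> exists i, x = a i.
  move=> x H; have xA : x \in A by rewrite inE H.
  by exists (enum_rank_in xA x); rewrite /a enum_rankK_in.
have CE : component hp u = r |: ([set a i | i : 'I_#|A|] :|: [set b i | i : 'I_#|A|]).
  rewrite component_rt /a imset_ev; congr (_ |: (_ :|: _)); apply/setP => v; rewrite !inE.
  apply/existsP/imsetP.
    case=> w /andP[/eqP H1 /eqP H2]; case: (aE _ H1) => i Ei.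
    by exists i => //; rewrite /b -Ei; apply: hc2.
  by case=> i _ ->; exists (a i); rewrite aP bP !eqxx.
have key : forall x y, x \in component hp u -> par x = Some y ->
    exists i, (x = a i /\ y = r) \/ (x = b i /\ y = a i).
  move=> x y; rewrite component_rt !inE; case/or3P=> [/eqP ->|/eqP H|].
  - by rewrite Hr.
  - rewrite H => -[<-]; case: (aE _ H) => i ->; exists i; left; done.
  - case/existsP=> w /andP[/eqP H1 /eqP H2]; rewrite H2 => -[<-].
    case: (aE _ H1) => i Ei; exists i; right; split=> //.
    by rewrite /b -Ei; apply: hc2.
exists #|A|, a, b; split=> //; split; first exact: enum_val_inj.
split.
  by move=> i j E; have := bP i; rewrite E bP => -[E2]; symmetry; exact: (enum_val_inj E2).
split.
  by apply/codomP => -[i Ei]; have := aP i; rewrite -Ei Hr.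
split.
  by apply/codomP => -[i Ei]; have := bP i; rewrite -Ei Hr.
split.
  rewrite disjoint_subset; apply/subsetP => x /codomP[i ->]; rewrite !inE.
  apply/codomP => -[j E]; have := bP j; rewrite -E aP => -[E2].
  by have := aP j; rewrite -E2 Hr.
split; first exact: CE.
move=> x y Hx Hy; split.
  case/orP=> /eqP H.
    case: (key _ _ Hx H) => i [[-> ->]|[-> ->]]; exists i; tauto.
  case: (key _ _ Hy H) => i [[-> ->]|[-> ->]]; exists i; tauto.
case=> i [[-> ->]|[[-> ->]|[[-> ->]|[-> ->]]]]; rewrite /hp ?aP ?bP ?eqxx ?orbT //.
Qed.

End Forest.


Section Main.
Variable T : finType.
Variable e : rel T.
Variables X Y : {set T}.
Hypothesis esym : symmetric e.
Hypothesis eirr : irreflexive e.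
Hypothesis econn : connected_graph e.
Hypothesis ebip : bipartition e X Y.
Hypothesis enostar : ~ (exists c, c \in Y /\ graph_is_star_centered e c).

Lemma inXY v : (v \in X) || (v \in Y).
Proof. case: ebip => _ U _ _; by rewrite -in_setU U inE. Qed.

Lemma notXY v : v \in X -> v \in Y -> False.
Proof. case: ebip => I _ _ _ vX vY; by have := in_setI v X Y; rewrite I inE vX vY. Qed.

Lemma adjY y v : y \in Y -> e y v -> v \notin Y.
Proof. case: ebip => _ _ _ hY yY evy; apply/negP => vY; by have := hY _ _ yY vY; rewrite evy. Qed.

Lemma adjNY v w : v \notin Y -> e v w -> w \in Y.
Proof.
case: ebip => _ _ hX _ vY evw.
have vX : v \in X by have := inXY v; rewrite (negbTE vY) orbF.
case/orP: (inXY w) => // wX; by have := hX _ _ vX wX; rewrite evw.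
Qed.

Lemma L0 y : y \in Y -> exists x' y'', [/\ e y x', e x' y'', y'' \in Y & y'' != y].
Proof.
move=> yY.
case: (boolP [exists x', exists y'', [&& e y x', e x' y'', y'' \in Y & y'' != y]]).
  by case/existsP=> x' /existsP[y'' /and4P[? ? ? ?]]; exists x', y''.
move=> Hn; exfalso; apply: enostar; exists y; split=> //.
have Hn' : forall x' y'', e y x' -> e x' y'' -> y'' \in Y -> y'' = y.
  move=> x' y'' H1 H2 H3; apply/eqP; apply/negPn/negP=> H4; move/negP: Hn; apply.
  by apply/existsP; exists x'; apply/existsP; exists y''; rewrite H1 H2 H3 H4.
have cl : forall b, connect e y b -> (b == y) || e y b.
  move=> b /connectP[p]; elim/last_ind: p b => [|p c IH] b /=; first by move=> _ ->; rewrite eqxx.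
  rewrite rcons_path last_rcons => /andP[Hp Hl] ->.
  case/orP: (IH _ Hp (erefl _)) => [/eqP E|E]; first by rewrite E in Hl; rewrite Hl orbT.
  have cY := adjY yY E; have := adjNY cY Hl => lY.
  by rewrite (Hn' _ _ E Hl lY) eqxx.
move=> a b.
case: (eqVneq a y) => [->|ay]; case: (eqVneq b y) => [->|bY] /=.
- by rewrite eirr.
- by case/orP: (cl b (econn y b)) => [/eqP E|->]; [rewrite E eqxx in bY|].
- by case/orP: (cl a (econn y a)) => [/eqP E|E]; [rewrite E eqxx in ay| rewrite esym].
case/orP: (cl a (econn y a)) => [/eqP E|Ea]; first by rewrite E eqxx in ay.
case/orP: (cl b (econn y b)) => [/eqP E|Eb]; first by rewrite E eqxx in bY.
have aX : a \in X by have := inXY a; rewrite (negbTE (adjY yY Ea)) orbF.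
have bX : b \in X by have := inXY b; rewrite (negbTE (adjY yY Eb)) orbF.
case: ebip => _ _ hX _; exact/negbTE/hX.
Qed.

Definition valid (f : {ffun T -> T}) := [forall y in Y, e y (f y)].

Lemma validP (f : {ffun T -> T}) : reflect (forall y, y \in Y -> e y (f y)) (valid f).
Proof. exact: forall_inP. Qed.

Definition O (f : {ffun T -> T}) :=
  [set y in Y | [exists y', [&& y' \in Y, y' != y & e (f y) y']]].
Definition G (f : {ffun T -> T}) :=
  [set y in Y | [exists y', [&& y' \in Y, y' != y & f y' == f y]]].
Definition Phi (f : {ffun T -> T}) := #|T|.+1 * #|O f| + #|G f|.

Lemma Phi_lt1 (f g : {ffun T -> T}) : O f \subset O g -> G f \proper G g -> Phi f < Phi g.
Proof.
move=> /subset_leq_card H1 /proper_card H2; rewrite /Phi; nia.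
Qed.

Lemma Phi_lt2 (f g : {ffun T -> T}) : O f \proper O g -> Phi f < Phi g.
Proof.
move=> /proper_card H1; have H2 := max_card (G f); rewrite /Phi; nia.
Qed.

Lemma O_sub (f g : {ffun T -> T}) : (forall w, w \in Y -> f w != g w -> w \in O g) -> O f \subset O g.
Proof.
move=> H; apply/subsetP=> w; rewrite inE => /andP[wY Hw].
case: (eqVneq (f w) (g w)) => [E|]; last exact: H.
by rewrite inE wY -E.
Qed.

Definition f0 : {ffun T -> T} := [ffun v => odflt v [pick x | e v x]].

Lemma f0_valid : valid f0.
Proof.
apply/validP=> y yY; rewrite ffunE; case: pickP => // Hn.
by case: (L0 yY) => x' [y'' [H _ _ _]]; rewrite Hn in H.
Qed.

Lemma exists_opt : exists f, valid f /\ forall g, valid g -> Phi g <= Phi f.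
Proof.
case: (@arg_maxnP _ f0 valid Phi f0_valid) => f Hf Hmax.
by exists f.
Qed.


Lemma inG (f : {ffun T -> T}) y q : y \in Y -> q \in Y -> q != y -> f q = f y -> y \in G f.
Proof. move=> yY qY qy E; rewrite inE yY; apply/existsP; exists q; by rewrite qY qy E eqxx. Qed.

Section Opt.
Variable f : {ffun T -> T}.
Hypothesis fv : forall y, y \in Y -> e y (f y).
Hypothesis opt : forall g, valid g -> Phi g <= Phi f.

Lemma no_better g : valid g -> Phi f < Phi g -> False.
Proof. by move=> /opt H1 H2; have := leq_trans H2 H1; rewrite ltnn. Qed.


Lemma inGP y : y \in G f -> y \in Y /\ exists q, [/\ q \in Y, q != y & f q = f y].
Proof. rewrite inE => /andP[yY /existsP[q /and3P[qY qy /eqP E]]]; split=> //; by exists q. Qed.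

Lemma inOP y : y \in O f -> exists q, [/\ q \in Y, q != y & e (f y) q].
Proof. rewrite inE => /andP[yY /existsP[q /and3P[qY qy E]]]; by exists q. Qed.

Lemma allO y : y \in Y -> y \in O f.
Proof.
move=> yY; apply/negPn/negP=> Hn.
case: (L0 yY) => x' [y'' [H1 H2 H3 H4]].
pose g : {ffun T -> T} := [ffun v => if v == y then x' else if v == y'' then x' else f v].
have gy : g y = x' by rewrite ffunE eqxx.
have gy'' : g y'' = x' by rewrite ffunE (negbTE H4) eqxx.
have gw : forall w, w != y -> w != y'' -> g w = f w.
  by move=> w Hw1 Hw2; rewrite ffunE (negbTE Hw1) (negbTE Hw2).
apply: (@no_better g).
  apply/validP=> w wY; have [->|wy] := eqVneq w y; first by rewrite gy.
  have [->|wy''] := eqVneq w y''; first by rewrite gy'' esym.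
  by rewrite gw //; apply: fv.
apply: Phi_lt2; apply/properP; split.
  apply: O_sub => w wY Hfg; have [->|wy] := eqVneq w y.
    by rewrite inE yY; apply/existsP; exists y''; rewrite H3 H4 gy H2.
  have [->|wy''] := eqVneq w y''; last by rewrite gw ?eqxx in Hfg.
  by rewrite inE H3; apply/existsP; exists y; rewrite yY eq_sym H4 gy'' esym H1.
exists y => //; by rewrite inE yY; apply/existsP; exists y''; rewrite H3 H4 gy H2.
Qed.

Definition upd1 (y' : T) (x : T) : {ffun T -> T} := [ffun v => if v == y' then x else f v].

Lemma A_common y y' : y \in Y -> y \notin G f -> y' \in Y -> y' != y -> e (f y) y' ->
  [/\ valid (upd1 y' (f y)), O f \subset O (upd1 y' (f y)),
      y \in G (upd1 y' (f y)), (upd1 y' (f y)) y' = f y &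
      forall w, w != y' -> (upd1 y' (f y)) w = f w].
Proof.
move=> yY yG y'Y y'y E.
have g1 : (upd1 y' (f y)) y' = f y by rewrite ffunE eqxx.
have gw : forall w, w != y' -> (upd1 y' (f y)) w = f w by move=> w /negbTE H; rewrite ffunE H.
split=> //.
- apply/validP=> w wY; have [->|wy] := eqVneq w y'; first by rewrite g1 esym.
  by rewrite gw //; apply: fv.
- apply: O_sub => w wY Hfg; have [->|wy] := eqVneq w y'; last by rewrite gw ?eqxx in Hfg.
  by rewrite inE y'Y; apply/existsP; exists y; rewrite yY eq_sym y'y g1 esym fv.
- rewrite inE yY; apply/existsP; exists y'; rewrite y'Y y'y g1 gw ?eqxx //.
  by rewrite eq_sym.
Qed.

Lemma A1 y y' : y \in Y -> y \notin G f -> y' \in Y -> y' != y -> e (f y) y' -> y' \in G f.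
Proof.
move=> yY yG y'Y y'y E; apply/negPn/negP=> Hn.
case: (A_common yY yG y'Y y'y E) => gv gO gG g1 gw.
apply: (no_better gv); apply: Phi_lt1 => //; apply/properP; split; last by exists y.
apply/subsetP=> w /inGP [wY [q [qY qw Eq]]].
have wy' : w != y' by apply: contraNneq Hn => <-; apply: (inG wY qY qw Eq).
have qy' : q != y'.
  apply: contraNneq Hn => E'; rewrite -E'.
  by apply: (inG qY wY); [rewrite eq_sym | rewrite Eq].
by apply: (@inG _ _ q) => //; rewrite !gw.
Qed.

Lemma A2 y y' u v : y \in Y -> y \notin G f -> y' \in Y -> y' != y -> e (f y) y' ->
  u \in Y -> v \in Y -> u != y' -> v != y' -> f u = f y' -> f v = f y' -> u = v.
Proof.
move=> yY yG y'Y y'y E uY vY uy' vy' Eu Ev; apply/eqP/negPn/negP=> uv.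
case: (A_common yY yG y'Y y'y E) => gv gO gG g1 gw.
apply: (no_better gv); apply: Phi_lt1 => //; apply/properP; split; last by exists y.
apply/subsetP=> w /inGP [wY [q [qY qw Eq]]].
have [->|wy'] := eqVneq w y'.
  apply: (@inG _ _ y) => //; first by rewrite eq_sym.
  by rewrite g1 gw // eq_sym.
have [Eqy|qy'] := eqVneq q y'; last by apply: (@inG _ _ q) => //; rewrite !gw.
rewrite Eqy in Eq.
have [Ewu|wu] := eqVneq w u.
  apply: (@inG _ _ v) => //; first by rewrite Ewu eq_sym.
  by rewrite !gw // Ev -Eq.
by apply: (@inG _ w u wY uY); [rewrite eq_sym | rewrite !gw // Eu -Eq].
Qed.

Lemma C y1 y2 z p : y1 \in Y -> y1 \notin G f -> y2 \in Y -> y2 \notin G f ->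
  z \in Y -> z != y1 -> e (f y1) z -> p \in Y -> p != z -> f p = f z ->
  p != y2 -> e (f y2) p -> False.
Proof.
move=> y1Y y1G y2Y y2G zY zy1 E1 pY pz Epz py2 E2.
have zG : z \in G f := A1 y1Y y1G zY zy1 E1.
have pG : p \in G f by apply: (inG pY zY); [rewrite eq_sym | rewrite Epz].
have y1z : y1 != z by apply: contraNneq y1G => ->.
have y1p : y1 != p by apply: contraNneq y1G => ->.
have y2z : y2 != z by apply: contraNneq y2G => ->.
have y2p : y2 != p by apply: contraNneq y2G => ->.
pose g : {ffun T -> T} := [ffun v => if v == z then f y1 else if v == p then f y2 else f v].
have gz : g z = f y1 by rewrite ffunE eqxx.
have gp : g p = f y2 by rewrite ffunE (negbTE pz) eqxx.
have gw : forall w, w != z -> w != p -> g w = f w.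
  by move=> w Hw1 Hw2; rewrite ffunE (negbTE Hw1) (negbTE Hw2).
apply: (@no_better g).
  apply/validP=> w wY; have [->|wz] := eqVneq w z; first by rewrite gz esym.
  have [->|wp] := eqVneq w p; first by rewrite gp esym.
  by rewrite gw //; apply: fv.
apply: Phi_lt1.
  apply: O_sub => w wY Hfg; have [->|wz] := eqVneq w z.
    by rewrite inE zY; apply/existsP; exists y1; rewrite y1Y y1z gz esym fv.
  have [->|wp] := eqVneq w p; last by rewrite gw ?eqxx in Hfg.
  by rewrite inE pY; apply/existsP; exists y2; rewrite y2Y y2p gp esym fv.
apply/properP; split; last first.
  exists y1 => //; apply: (@inG _ y1 z y1Y zY zy1).
  by rewrite gz gw.
apply/subsetP=> w /inGP [wY [q [qY qw Eq]]].
have [->|wz] := eqVneq w z.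
  by apply: (@inG _ z y1 zY y1Y y1z); rewrite gz gw.
have [->|wp] := eqVneq w p.
  by apply: (@inG _ p y2 pY y2Y y2p); rewrite gp gw.
have [Eqz|qz] := eqVneq q z.
  exfalso; rewrite Eqz in Eq.
  have := A2 y1Y y1G zY zy1 E1 wY pY wz pz (sym_equal Eq) Epz.
  by move=> Ewp; rewrite Ewp eqxx in wp.
have [Eqp|qp] := eqVneq q p.
  exfalso; rewrite Eqp Epz in Eq.
  have := A2 y1Y y1G zY zy1 E1 wY pY wz pz (sym_equal Eq) Epz.
  by move=> Ewp; rewrite Ewp eqxx in wp.
by apply: (@inG _ w q wY qY qw); rewrite !gw.
Qed.


Definition bad y := (y \in Y) && (y \notin G f).
Definition att y := odflt y [pick y' in Y | (y' != y) && e (f y) y'].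

Lemma attP y : y \in Y -> [/\ att y \in Y, att y != y & e (f y) (att y)].
Proof.
move=> yY; rewrite /att; case: pickP => [y' /andP[H1 /andP[H2 H3]]|Hn] //=.
case: (inOP (allO yY)) => q [qY qy E]; by move: (Hn q); rewrite qY qy E.
Qed.

Definition Z := [set z in Y | [exists y, bad y && (att y == z)]].

Lemma ZP z : z \in Z -> z \in Y /\ exists y, [/\ y \in Y, y \notin G f & att y = z].
Proof.
rewrite inE => /andP[zY /existsP[y /andP[/andP[yY yG] /eqP E]]]; split=> //; by exists y.
Qed.

Lemma ZY z : z \in Z -> z \in Y.
Proof. by case/ZP. Qed.

Lemma ZG z : z \in Z -> z \in G f.
Proof.
case/ZP=> zY [y [yY yG <-]]; case: (attP yY) => H1 H2 H3; exact: A1 yY yG H1 H2 H3.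
Qed.

Lemma attZ y : y \in Y -> y \notin G f -> att y \in Z.
Proof.
move=> yY yG; rewrite inE; case: (attP yY) => -> _ _ /=.
by apply/existsP; exists y; rewrite /bad yY yG eqxx.
Qed.

Lemma fNY y : y \in Y -> f y \notin Y.
Proof. move=> yY; exact: adjY yY (fv yY). Qed.

Lemma bad_inj y1 y2 : y1 \in Y -> y1 \notin G f -> y2 \in Y -> f y2 = f y1 -> y2 = y1.
Proof.
move=> y1Y y1G y2Y E; apply/eqP; apply/negPn/negP=> H.
by move/negP: y1G; apply; apply: (inG y1Y y2Y H E).
Qed.

Lemma Zpartner z p : z \in Z -> p \in Y -> p != z -> f p = f z -> p \notin Z.
Proof.
move=> zZ pY pz Epz; apply/negP=> pZ.
case: (ZP zZ) => zY [y1 [y1Y y1G E1]]; case: (ZP pZ) => _ [y2 [y2Y y2G E2]].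
case: (attP y1Y) => _; rewrite E1 => zy1 Ez.
case: (attP y2Y) => _; rewrite E2 => py2 Ep.
exact: (C y1Y y1G y2Y y2G zY zy1 Ez pY pz Epz py2 Ep).
Qed.

Lemma Zuniq z p q : z \in Z -> p \in Y -> q \in Y -> p != z -> q != z ->
  f p = f z -> f q = f z -> p = q.
Proof.
move=> zZ pY qY pz qz Ep Eq.
case: (ZP zZ) => zY [y1 [y1Y y1G E1]].
case: (attP y1Y) => _; rewrite E1 => zy1 Ez.
exact: (A2 y1Y y1G zY zy1 Ez pY qY pz qz Ep Eq).
Qed.

Definition par v : option T :=
  if v \in Y then (if v \in Z then None else Some (f v))
  else if [pick y | bad y && (f y == v)] is Some y then Some (att y)
  else if [pick z in Z | f z == v] is Some z then Some z else None.

Lemma parY v : v \in Y -> par v = if v \in Z then None else Some (f v).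
Proof. by rewrite /par => ->. Qed.

Lemma parN v w : v \notin Y -> par v = Some w -> w \in Z /\
  exists y, [/\ y \in Y, f y = v & (y \notin G f /\ w = att y) \/ (y \in Z /\ w = y)].
Proof.
rewrite /par => /negbTE ->.
case: pickP => [y /andP[/andP[yY yG] /eqP Ey] [<-]|_].
  split; first exact: attZ.
  by exists y; split=> //; left.
case: pickP => [z /andP[zZ /eqP Ez] [<-]|_] //.
by split=> //; exists z; split=> //; [exact: ZY | right].
Qed.

Lemma par_depth u v w : par u = Some v -> par v = Some w -> par w = None.
Proof.
case: (boolP (u \in Y)) => uY.
  rewrite parY //; case: ifP => // _ [<-] H.
  case: (parN (fNY uY) H) => wZ _; by rewrite parY ?wZ // ZY.
move=> H; case: (parN uY H) => vZ _; by rewrite parY ?vZ // ZY.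
Qed.

Lemma par_e u v : par u = Some v -> e u v.
Proof.
case: (boolP (u \in Y)) => uY.
  by rewrite parY //; case: ifP => // _ [<-]; apply: fv.
move=> H; case: (parN uY H) => _ [y [yY <- [[_ ->]|[_ ->]]]].
  by case: (attP yY).
by rewrite esym fv.
Qed.

Lemma parfZ z : z \in Z -> par (f z) = Some z.
Proof.
move=> zZ; have zY := ZY zZ; have zG := ZG zZ.
rewrite /par (negbTE (fNY zY)).
case: pickP => [y0 /andP[/andP[y0Y y0G] /eqP E]|_].
  have zy0 : z != y0 by apply: contraNneq y0G => E'; rewrite -E'.
  by exfalso; move/negP: y0G; apply; apply: (inG y0Y zY zy0); rewrite E.
case: pickP => [z' /andP[z'Z /eqP E]|Hn].
  congr Some; apply/eqP; apply/negPn/negP=> z'z.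
  by move/negP: (Zpartner zZ (ZY z'Z) z'z E); apply.
by move: (Hn z); rewrite zZ eqxx.
Qed.

Lemma parf_bad y : y \in Y -> y \notin G f -> par (f y) = Some (att y).
Proof.
move=> yY yG; rewrite /par (negbTE (fNY yY)).
case: pickP => [y0 /andP[/andP[y0Y y0G] /eqP E]|Hn].
  by rewrite (bad_inj yY yG y0Y E).
by move: (Hn y); rewrite /bad yY yG eqxx.
Qed.


Definition Sset := [set v | (par v != None) || [exists w, par w == Some v]].

Lemma tgt_rt x : x \in Sset -> exists w, par w = Some (rt par x).
Proof.
rewrite /rt; case E: (par x) => [v|].
  case E2: (par v) => [w|]; [by exists v | by exists x].
by rewrite inE E /= => /existsP[w /eqP H]; exists w.
Qed.

Definition child x := odflt x [pick v in Y | (f v == x) && (v \notin Z)].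

Lemma childP x : x \notin Y -> par x != None ->
  [/\ child x \in Y, f (child x) = x & child x \notin Z].
Proof.
move=> xY; case E: (par x) => [w|] // _.
case: (parN xY E) => _ [y [yY Ey Hy]].
have [c Hc] : exists c, [&& c \in Y, f c == x & c \notin Z].
  case: Hy => [[yG _]|[yZ _]].
    exists y; rewrite yY Ey eqxx /=; apply: contra yG; exact: ZG.
  case: (inGP (ZG yZ)) => _ [p [pY py Ep]].
  by exists p; rewrite pY Ep Ey eqxx /= (Zpartner yZ pY py Ep).
rewrite /child; case: pickP => [c' /andP[H1 /andP[/eqP H2 H3]]|Hn] //=.
by move: (Hn c); rewrite Hc.
Qed.

Lemma build : exists (S : {set T}) (h : rel T),
    [/\ subgraph e S h,
        (forall y, y \in Y -> exists z, h y z) &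
        (forall x, x \in S ->
           (exists c, c \in X /\ comp_is_star h (component h x) c) \/
           (exists c, c \in Y /\ comp_is_subdivided_star h (component h x) c))].
Proof.
have dep := par_depth.
exists Sset, (hp par); split.
- split; first exact: hp_sym.
  + by move=> x y /orP[/eqP H|/eqP H]; [exact: par_e | rewrite esym; exact: par_e].
  + move=> x y /orP[/eqP H|/eqP H]; rewrite !inE H /=; split=> //.
      by apply/orP; right; apply/existsP; exists x; rewrite H.
    by apply/orP; right; apply/existsP; exists y; rewrite H.
- move=> y yY; case: (boolP (y \in Z)) => yZ.
    by exists (f y); rewrite /hp parfZ // eqxx orbT.
  by exists (f y); rewrite /hp parY // (negbTE yZ) eqxx.
move=> x xS.
have [w0 Hw0] := tgt_rt xS.
have Hr : par (rt par x) = None := rt_none dep x.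
move: Hw0 Hr; set r := rt par x => Hw0 Hr.
have NYpar : forall x0, par x0 = Some r -> r \in Y -> x0 \notin Y.
  move=> x0 H rY; apply/negP=> x0Y; move: H; rewrite parY //; case: ifP => // _ [E].
  by move: (fNY x0Y); rewrite E rY.
case: (boolP (r \in Y)) => rY.
  right; exists r; split=> //.
  have rZ : r \in Z by move: Hr; rewrite parY //; case: ifP.
  apply: (sub_gen dep (child := child)).
  + move=> x0 H; have x0Y := NYpar _ H rY.
    case: (childP x0Y); first by rewrite H.
    by move=> cY cE cZ; rewrite parY // (negbTE cZ) cE.
  + move=> v x0 H Hv; have x0Y := NYpar _ H rY.
    case: (childP x0Y); first by rewrite H.
    move=> cY cE cZ.
    have vY : v \in Y.
      apply/negPn/negP=> vY; case: (parN vY Hv) => x0Z _.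
      by move: x0Y; rewrite ZY.
    move: Hv; rewrite parY //; case: ifP => // vZ [Ev].
    case: (parN x0Y H) => _ [y [yY Ey [[yG _]|[yZ _]]]].
      have E1 : f v = f y by rewrite Ev Ey.
      have E2 : f (child x0) = f y by rewrite cE Ey.
      by rewrite (bad_inj yY yG vY E1) (bad_inj yY yG cY E2).
    apply: (Zuniq yZ vY cY).
    * by apply: contraFneq vZ => ->.
    * by apply: contraNneq cZ => ->.
    * by rewrite Ev Ey.
    * by rewrite cE Ey.
  + case: (ZP rZ) => _ [y0 [y0Y y0G Ey0]].
    apply/card_gt1P; exists (f y0), (f r); rewrite !inE parf_bad // parfZ // Ey0 !eqxx; split=> //.
    apply/negP=> /eqP E; move/negP: y0G; apply; apply: (inG y0Y (ZY rZ)).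
      by case: (attP y0Y); rewrite Ey0.
    by rewrite E.
left; exists r; split.
  by have := inXY r; rewrite (negbTE rY) orbF.
apply: (star_gen dep).
  move=> v w H; apply/eqP=> Hw.
  case: (boolP (w \in Y)) => wY.
    case: (boolP (v \in Y)) => vY.
      move: H; rewrite parY //; case: ifP => // _ [E].
      by move: (fNY vY); rewrite E wY.
    case: (parN vY H) => wZ _; by move: Hw; rewrite parY // wZ.
  by case: (parN wY Hw) => rZ _; move: rY; rewrite ZY.
have w0Y : w0 \in Y.
  apply/negPn/negP=> w0Y; case: (parN w0Y Hw0) => rZ _; by move: rY; rewrite ZY.
move: (Hw0); rewrite parY //; case: ifP => // w0Z [Ew0].
have w0G : w0 \in G f.
  apply/negPn/negP=> w0G; have := parf_bad w0Y w0G; by rewrite Ew0 Hr.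
case: (inGP w0G) => _ [q [qY qw Eq]].
have qZ : q \notin Z.
  apply/negP=> qZ; have := parfZ qZ; by rewrite Eq Ew0 Hr.
apply/card_gt1P; exists w0, q; rewrite !inE Hw0 parY // (negbTE qZ) Eq Ew0 eqxx; split=> //.
by rewrite eq_sym.
Qed.

End Opt.



End Main.


Theorem mainTheorem4 (T : finType) (e : rel T) (X Y : {set T}) :
  symmetric e -> irreflexive e ->
  connected_graph e ->
  bipartition e X Y ->
  at_least_two_edges e ->
  ~ (exists c, c \in Y /\ graph_is_star_centered e c) ->
  exists (S : {set T}) (h : rel T),
    [/\ subgraph e S h,
        (forall y, y \in Y -> exists z, h y z) &
        (forall x, x \in S ->
           (exists c, c \in X /\ comp_is_star h (component h x) c) \/
           (exists c, c \in Y /\ comp_is_subdivided_star h (component h x) c))].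
Proof.
move=> esy eirr conn bip _ nostar.
case: (exists_opt esy eirr conn bip nostar) => f [/validP fv fopt].
exact: (build esy eirr conn bip nostar fv fopt).
Qed.
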